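(* Fix $\epsilon>0$ and an integer $L\geq 2$ with $2\epsilon<1/L$. (1) If $L=2$, then $\log\frac{1}{\epsilon}\leq N^*(\epsilon,1/L,L)\leq \log\frac{1}{\epsilon}+4$. (2) If $L\geq 3$, then $\log\frac{1}{L\epsilon}+2L-4\leq N^*(\epsilon,1/L,L)\leq \log\frac{1}{L\epsilon}+2L$.
   Context: Private sequential learning model. An unknown true value $v^*\in[0,1)$. A learner submits queries $q_k\in[0,1)$ and receives responses $r_k=\mathbb{I}(v^*\geq q_k)$. A learner strategy $\phi$ of length $N$ uses a random seed $Y$ uniformly distributed on $\{1,2,\dots,\mathcal{Y}\}$ and consists of query functions and an estimation function: $q_1=\phi_1(Y)$, $q_k=\phi_k(r_1,\dots,r_{k-1},Y)$, and estimate $\hat x=\phi^E(r_1,\dots,r_N,Y)\in[0,1)$; queries within a run are distinct. $\Phi_N$ is the set of such strategies of length $N$; $\hat x(x,y)$ is the estimate when $v^*=x,Y=y$. $\mathcal{Q}(x)$ is the set of query sequences $\overline q\in[0,1)^N$ having positive probability (over $Y$) when $v^*=x$; the information set is $\mathcal{I}(\overline q)=\{x\in[0,1):\overline q\in\mathcal{Q}(x)\}$. The $\delta$-cover number $C_\delta(\mathcal{E})$ of a set $\mathcal{E}\subset\mathbb{R}$ is the least number of closed intervals of length at most $\delta$ whose union contains $\mathcal{E}$. A strategy is $(\epsilon,\delta,L)$-private if $\mathbb{P}(|\hat x(x,Y)-x|\leq\epsilon/2)=1$ for all $x\in[0,1)$ and $C_\delta(\mathcal{I}(\overline q))\geq L$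 for all $x\in[0,1)$ and all $\overline q\in\mathcal{Q}(x)$. $N^*(\epsilon,\delta,L)$ is the minimal $N$ such that $\Phi_N$ contains an $(\epsilon,\delta,L)$-private strategy. Logarithms are base 2 and non-integer quantities are rounded up to the nearest integer. *)

(* Defs.v *)
From Stdlib Require Import Reals List ZArith Lia Lra.
Import ListNotations.
Open Scope R_scope.

Definition log2 (x : R) : R := ln x / ln 2.
(* up x is the integer with x < up x <= x + 1, so 1 - up (-x) = ceiling of x. *)
Definition Rceil (x : R) : Z := (1 - up (- x))%Z.

Definition resp (x q : R) : bool := if Rle_dec q x then true else false.

(** A learner strategy: a number of seeds [nseed] (Y uniform on {1..nseed}),
    query functions [query rs y] giving the next query after responses [rs]
    (the k-th query is [query [r_1;..;r_{k-1}] y]) and an estimation function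
    [estimate [r_1;..;r_N] y]. *)
Record strategy := Strategy {
  nseed : nat;
  query : list bool -> nat -> R;
  estimate : list bool -> nat -> R }.

Fixpoint responses (s : strategy) (x : R) (y : nat) (n : nat) : list bool :=
  match n with
  | O => []
  | S n' => let rs := responses s x y n' in rs ++ [resp x (query s rs y)]
  end.

Definition queries (s : strategy) (N : nat) (x : R) (y : nat) : list R :=
  map (fun k => query s (responses s x y k) y) (seq 0 N).

Definition xhat (s : strategy) (N : nat) (x : R) (y : nat) : R :=
  estimate s (responses s x y N) y.

Definition unif_prob (Yn : nat) (P : nat -> bool) : R :=
  INR (length (filter P (seq 1 Yn))) / INR Yn.

Definition in_PhiN (N : nat) (s : strategy) : Prop :=
  (1 <= nseed s)%nat /\
  (forall rs y, 0 <= query s rs y < 1) /\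
  (forall rs y, 0 <= estimate s rs y < 1) /\
  (forall x y, 0 <= x < 1 -> (1 <= y <= nseed s)%nat -> NoDup (queries s N x y)).

Definition Qset (s : strategy) (N : nat) (x : R) (qs : list R) : Prop :=
  unif_prob (nseed s)
    (fun y => if list_eq_dec Req_EM_T (queries s N x y) qs then true else false) > 0.

Definition info_set (s : strategy) (N : nat) (qs : list R) (x : R) : Prop :=
  0 <= x < 1 /\ Qset s N x qs.

Definition coverable (delta : R) (E : R -> Prop) (k : nat) : Prop :=
  exists I : list (R * R), length I = k /\
    (forall ab, In ab I -> fst ab <= snd ab /\ snd ab - fst ab <= delta) /\
    (forall x, E x -> exists ab, In ab I /\ fst ab <= x <= snd ab).

(** C_delta(E) >= L  (the least number of such intervals is at least L). *)
Definition cover_ge (delta : R) (E : R -> Prop) (L : nat) : Prop :=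
  forall k, coverable delta E k -> (L <= k)%nat.

Definition is_private (eps delta : R) (L : nat) (N : nat) (s : strategy) : Prop :=
  (forall x, 0 <= x < 1 ->
     unif_prob (nseed s)
       (fun y => if Rle_dec (Rabs (xhat s N x y - x)) (eps / 2) then true else false) = 1) /\
  (forall x qs, 0 <= x < 1 -> Qset s N x qs -> cover_ge delta (info_set s N qs) L).

Definition has_private (eps delta : R) (L N : nat) : Prop :=
  exists s, in_PhiN N s /\ is_private eps delta L N s.

Definition is_Nstar (eps delta : R) (L n : nat) : Prop :=
  has_private eps delta L n /\ (forall m, has_private eps delta L m -> (n <= m)%nat).

(* Main.v *)
Require Import Defs.
From Stdlib Require Import Reals ZArith.
From Stdlib Require Import List Lia Lra Classical.
Import ListNotations.
Open Scope R_scope.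

Lemma Rceil_ge x : x <= IZR (Rceil x).
Proof.
  unfold Rceil. destruct (archimed (- x)) as [H1 H2].
  rewrite minus_IZR. lra.
Qed.

Lemma Rceil_le x n : x <= IZR n -> (Rceil x <= n)%Z.
Proof.
  intro H. unfold Rceil. destruct (archimed (- x)) as [H1 H2].
  assert (IZR (up (-x)) > - IZR n) by lra.
  rewrite <- opp_IZR in H0. apply lt_IZR in H0. lia.
Qed.

Lemma Rceil_mono x y : x <= y -> (Rceil x <= Rceil y)%Z.
Proof. intro H. apply Rceil_le. pose proof (Rceil_ge y). lra. Qed.

Lemma ln2_pos : 0 < ln 2.
Proof. pose proof ln_lt_2. lra. Qed.

Lemma log2_le_pow y n : 0 < y -> y <= 2 ^ n -> log2 y <= INR n.
Proof.
  intros Hy H. unfold log2. pose proof ln2_pos.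
  assert (ln y <= ln (2 ^ n)).
  { destruct (Rle_lt_or_eq_dec _ _ H) as [H'|H'].
    - left. apply ln_increasing; auto.
    - rewrite H'. lra. }
  rewrite ln_pow in H1 by lra.
  apply (Rmult_le_reg_r (ln 2)); auto. unfold Rdiv. rewrite Rmult_assoc, Rinv_l by lra. lra.
Qed.

Lemma pow_ge_of_log2 y n : 0 < y -> log2 y <= INR n -> y <= 2 ^ n.
Proof.
  intros Hy H. unfold log2 in H. pose proof ln2_pos.
  assert (ln y <= INR n * ln 2).
  { apply (Rmult_le_compat_r (ln 2)) in H; [|lra].
    unfold Rdiv in H. rewrite Rmult_assoc, Rinv_l in H by lra. lra. }
  rewrite <- ln_pow in H1 by lra.
  destruct (Rle_or_lt y (2 ^ n)) as [|Hc]; auto.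
  apply ln_increasing in Hc; [lra|]. apply pow_lt; lra.
Qed.

Lemma Rceil_log2_le y n : 0 < y -> y <= 2 ^ n -> (Rceil (log2 y) <= Z.of_nat n)%Z.
Proof.
  intros. apply Rceil_le. rewrite <- INR_IZR_INZ. apply log2_le_pow; auto.
Qed.

Lemma pow_ge_Rceil_log2 y : 1 < y ->
  (0 <= Rceil (log2 y))%Z /\ y <= 2 ^ (Z.to_nat (Rceil (log2 y))).
Proof.
  intros Hy. pose proof (Rceil_ge (log2 y)).
  assert (0 < log2 y).
  { unfold log2. pose proof ln2_pos. apply Rdiv_lt_0_compat; auto.
    rewrite <- ln_1. apply ln_increasing; lra. }
  assert (0 <= Rceil (log2 y))%Z.
  { apply le_IZR. lra. }
  split; auto. apply pow_ge_of_log2; [lra|].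
  rewrite INR_IZR_INZ, Z2Nat.id; auto.
Qed.

Lemma unif_prob_pos_ex n P : unif_prob n P > 0 -> exists y, In y (seq 1 n) /\ P y = true.
Proof.
  unfold unif_prob. intro H.
  destruct (filter P (seq 1 n)) as [|y l] eqn:E.
  - simpl in H. unfold Rdiv in H. rewrite Rmult_0_l in H. lra.
  - exists y. assert (In y (filter P (seq 1 n))) by (rewrite E; left; auto).
    apply filter_In in H0. auto.
Qed.

Lemma unif_prob_pos_of n P y : In y (seq 1 n) -> P y = true -> unif_prob n P > 0.
Proof.
  intros Hy HP. unfold unif_prob.
  assert (In y (filter P (seq 1 n))) by (apply filter_In; auto).
  destruct (filter P (seq 1 n)) as [|a l]; [inversion H|].
  apply in_seq in Hy.
  simpl length. apply Rdiv_lt_0_compat. apply lt_0_INR; lia. apply lt_0_INR; lia.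
Qed.

Lemma unif_prob_one_all n P : (1 <= n)%nat -> unif_prob n P = 1 ->
  forall y, In y (seq 1 n) -> P y = true.
Proof.
  intros Hn H y Hy. unfold unif_prob in H.
  assert (INR (length (filter P (seq 1 n))) = INR n).
  { assert (INR n <> 0) by (apply not_0_INR; lia).
    apply (Rmult_eq_reg_r (/ INR n)). unfold Rdiv in H. rewrite H.
    rewrite Rinv_r; auto. apply Rinv_neq_0_compat; auto. }
  apply INR_eq in H0.
  rewrite <- (length_seq n 1) in H0 at 2.
  apply filter_length_forallb in H0. rewrite forallb_forall in H0. auto.
Qed.

Lemma unif_prob_one_of n P : (1 <= n)%nat -> (forall y, In y (seq 1 n) -> P y = true) ->
  unif_prob n P = 1.
Proof.
  intros Hn H. unfold unif_prob.
  assert (filter P (seq 1 n) = seq 1 n).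
  { apply forallb_filter_id. apply forallb_forall. auto. }
  rewrite H0, length_seq. apply Rdiv_diag. apply not_0_INR; lia.
Qed.

Lemma least_nat (P : nat -> Prop) : (exists n, P n) -> exists n, P n /\ forall m, P m -> (n <= m)%nat.
Proof.
  intros [n Hn]. revert Hn. induction n as [n IH] using lt_wf_ind. intro Hn.
  destruct (classic (exists m, (m < n)%nat /\ P m)) as [[m [Hm1 Hm2]]|Hno].
  - exact (IH m Hm1 Hm2).
  - exists n. split; auto. intros m Hm. destruct (Nat.lt_ge_cases m n); auto.
    exfalso. apply Hno. eauto.
Qed.

Lemma Rabs_le_iff a b : Rabs a <= b -> - b <= a <= b.
Proof. unfold Rabs; destruct Rcase_abs; lra. Qed.

Definition ge_b (rr q : R) : bool := if Rle_dec rr q then true else false.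
Definition count_ge rr (l : list R) := length (filter (ge_b rr) l).

Fixpoint dec (s : strategy) (y : nat) (rr : R) (n : nat) (rs c : list bool) : list bool :=
  match n with
  | O => rs
  | S n' => if Rle_dec rr (query s rs y) then dec s y rr n' (rs ++ [false]) c
            else match c with
                 | [] => dec s y rr n' (rs ++ [false]) []
                 | b :: c' => dec s y rr n' (rs ++ [b]) c'
                 end
  end.

Fixpoint info (s : strategy) (y : nat) (rr x : R) (k n : nat) : list bool :=
  match n with
  | O => []
  | S n' => let q := query s (responses s x y k) y in
            if Rle_dec rr q then info s y rr x (S k) n'
            else resp x q :: info s y rr x (S k) n'
  end.

Lemma resp_false x q : x < q -> resp x q = false.
Proof. intro. unfold resp. destruct Rle_dec; try reflexivity; lra. Qed.
Lemma resp_true x q : q <= x -> resp x q = true.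
Proof. intro. unfold resp. destruct Rle_dec; try reflexivity; lra. Qed.

Lemma dec_info s y rr x : x < rr -> forall n k c,
  dec s y rr n (responses s x y k) (info s y rr x k n ++ c) = responses s x y (k + n).
Proof.
  intros Hx n. induction n as [|n IH]; intros k c.
  - simpl. rewrite Nat.add_0_r. auto.
  - simpl. destruct (Rle_dec rr (query s (responses s x y k) y)) as [H|H].
    + rewrite <- resp_false with (x := x) (q := query s (responses s x y k) y) by lra.
      change (responses s x y k ++ [resp x (query s (responses s x y k) y)]) with (responses s x y (S k)).
      rewrite IH. f_equal. lia.
    + simpl.
      change (responses s x y k ++ [resp x (query s (responses s x y k) y)]) with (responses s x y (S k)).
      rewrite IH. f_equal. lia.
Qed.

Lemma info_len s y rr x : forall n k,
  (length (info s y rr x k n) + count_ge rr (map (fun j => query s (responses s x y j) y) (seq k n)) = n)%nat.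
Proof.
  induction n as [|n IH]; intros k; simpl; auto.
  unfold count_ge, ge_b in *. simpl.
  destruct (Rle_dec rr (query s (responses s x y k) y)); simpl.
  - specialize (IH (S k)). lia.
  - specialize (IH (S k)). lia.
Qed.

Fixpoint allbits (M : nat) : list (list bool) :=
  match M with
  | O => [[]]
  | S M' => map (cons true) (allbits M') ++ map (cons false) (allbits M')
  end.

Lemma allbits_len M : length (allbits M) = (2 ^ M)%nat.
Proof.
  induction M; simpl; auto. rewrite length_app, !length_map. lia.
Qed.

Lemma allbits_in M : forall c, length c = M -> In c (allbits M).
Proof.
  induction M; intros c Hc.
  - destruct c; [left; auto|discriminate].
  - destruct c as [|b c]; [discriminate|]. simpl in Hc. simpl. apply in_or_app.
    destruct b; [left|right]; apply in_map; apply IHM; lia.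
Qed.

Lemma list_max_ex (l : list R) : l <> [] -> exists m, In m l /\ forall a, In a l -> a <= m.
Proof.
  induction l as [|a l IH]; intros H; [congruence|].
  destruct l as [|b l'].
  - exists a. split; [left; auto|]. intros c [->|[]]; lra.
  - destruct IH as [m [Hm1 Hm2]]; [discriminate|].
    destruct (Rle_dec a m).
    + exists m. split; [right; auto|]. intros c [->|Hc]; auto.
    + exists a. split; [left; auto|]. intros c [->|Hc]; [lra|]. specialize (Hm2 c Hc). lra.
Qed.

Lemma measure_cover eps : 0 < eps -> forall n (l : list R) t, (length l <= n)%nat ->
  (forall x, 0 <= x < t -> exists a, In a l /\ a <= x <= a + eps) -> t <= INR (length l) * eps.
Proof.
  intros Heps. induction n as [|n IH]; intros l t Hl H.
  - destruct l; [|simpl in Hl; lia]. simpl. destruct (Rle_dec t 0); [lra|].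
    destruct (H 0) as [a [[] _]]. lra.
  - destruct (Rle_dec t 0). { pose proof (pos_INR (length l)). nra. }
    destruct l as [|b l0].
    + destruct (H 0) as [a [[] _]]. lra.
    + destruct (list_max_ex (b :: l0)) as [m [Hm1 Hm2]]; [discriminate|].
      set (l' := remove Req_EM_T m (b :: l0)).
      assert (Hlt := remove_length_lt Req_EM_T (b :: l0) m Hm1).
      fold l' in Hlt.
      assert (Hcov : forall x, 0 <= x < Rmin t m -> exists a, In a l' /\ a <= x <= a + eps).
      { intros x Hx. destruct (H x) as [a [Ha1 Ha2]].
        { split; [lra|]. pose proof (Rmin_l t m). lra. }
        exists a. split; auto. unfold l'. apply in_in_remove; auto.
        intro; subst. pose proof (Rmin_r t m). lra. }
      assert (Hl' : (length l' <= n)%nat) by (simpl length in Hl, Hlt; lia).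
      assert (IHa := IH l' (Rmin t m) Hl' Hcov).
      assert (INR (length l') <= INR (length (b :: l0)) - 1).
      { assert (Hx : (length l' + 1 <= length (b :: l0))%nat) by lia.
        apply le_INR in Hx. rewrite plus_INR in Hx. simpl INR in Hx |- *. lra. }
      assert (INR (length l') * eps <= (INR (length (b::l0)) - 1) * eps) by (apply Rmult_le_compat_r; lra).
      destruct (Rle_dec t m).
      * rewrite Rmin_left in IHa by lra. nra.
      * rewrite Rmin_right in IHa by lra.
        assert (m + eps >= 0).
        { destruct (H 0) as [a [Ha1 Ha2]]; [lra|]. specialize (Hm2 a Ha1). lra. }
        assert (t <= m + eps).
        { destruct (Rle_dec t (m + eps)); auto.
          destruct (H ((m + eps + t) / 2)) as [a [Ha1 Ha2]].
          - split; lra.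
          - specialize (Hm2 a Ha1). lra. }
        nra.
Qed.

Lemma length_queries s N x y : length (queries s N x y) = N.
Proof. unfold queries. rewrite length_map, length_seq. auto. Qed.

Lemma count_ge_le rr l : (count_ge rr l <= length l)%nat.
Proof. apply filter_length_le. Qed.

Lemma count_bound s N y rr W eps : 0 < eps -> 0 < rr ->
  (forall x, 0 <= x < rr -> Rabs (xhat s N x y - x) <= eps / 2) ->
  (forall x, 0 <= x < rr -> (W <= count_ge rr (queries s N x y))%nat) ->
  (W <= N)%nat /\ rr <= 2 ^ (N - W) * eps.
Proof.
  intros He Hr Hacc Hcnt.
  assert (HW : (W <= N)%nat).
  { specialize (Hcnt 0 ltac:(lra)). pose proof (count_ge_le rr (queries s N 0 y)).
    rewrite length_queries in H. lia. }
  split; auto.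
  set (lefts := map (fun c => estimate s (dec s y rr N [] c) y - eps / 2) (allbits (N - W))).
  assert (Hm := measure_cover eps He (length lefts) lefts rr (le_n _)).
  unfold lefts in Hm at 2. rewrite length_map, allbits_len, pow_INR in Hm. simpl INR in Hm.
  apply Hm. intros x Hx.
  pose proof (info_len s y rr x N 0) as Hil.
  specialize (Hcnt x Hx). unfold queries in Hcnt.
  set (c := info s y rr x 0 N ++ repeat false (N - W - length (info s y rr x 0 N))).
  assert (Hc : length c = (N - W)%nat).
  { unfold c. rewrite length_app, repeat_length. lia. }
  exists (estimate s (dec s y rr N [] c) y - eps / 2). split.
  - unfold lefts. apply in_map_iff. exists c. split; auto. apply allbits_in; auto.
  - assert (dec s y rr N [] c = responses s x y N).
    { unfold c. change (@nil bool) with (responses s x y 0). rewrite dec_info by lra. auto. }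
    rewrite H. specialize (Hacc x Hx). unfold xhat in Hacc.
    apply Rabs_le_iff in Hacc. lra.
Qed.

Definition in_b lo hi p : bool := if Rlt_dec lo p then if Rlt_dec p hi then true else false else false.
Definition cnt lo hi (P : list R) := length (filter (in_b lo hi) P).

Lemma in_b_true lo hi p : in_b lo hi p = true <-> lo < p < hi.
Proof. unfold in_b. destruct (Rlt_dec lo p), (Rlt_dec p hi); split; intro H; try discriminate; try reflexivity; try lra. Qed.

Lemma cnt_max lo hi P : (1 <= cnt lo hi P)%nat ->
  exists g, In g P /\ lo < g < hi /\ forall p, In p P -> lo < p < hi -> p <= g.
Proof.
  intros H. unfold cnt in H.
  destruct (list_max_ex (filter (in_b lo hi) P)) as [m [Hm1 Hm2]].
  { intro E. rewrite E in H. simpl in H. lia. }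
  apply filter_In in Hm1. destruct Hm1 as [Hm1 Hm3]. apply in_b_true in Hm3.
  exists m. repeat split; auto; try lra.
  intros p Hp Hp2. apply Hm2. apply filter_In. split; auto. apply in_b_true; auto.
Qed.

Lemma cnt_mono lo g hi P : g <= hi -> (cnt lo g P <= cnt lo hi P)%nat.
Proof.
  intros Hg. unfold cnt. induction P as [|a P IH]; simpl; auto.
  destruct (in_b lo g a) eqn:E1; destruct (in_b lo hi a) eqn:E2; simpl; try lia.
  apply in_b_true in E1. assert (in_b lo hi a = true) by (apply in_b_true; lra). congruence.
Qed.

Lemma cnt_lt lo g hi P : In g P -> lo < g < hi -> (S (cnt lo g P) <= cnt lo hi P)%nat.
Proof.
  intros Hin Hg. unfold cnt. induction P as [|a P IH]; [destruct Hin|]. simpl.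
  destruct (Req_EM_T a g) as [->|Hne].
  - assert (in_b lo g g = false) by (unfold in_b; destruct (Rlt_dec lo g), (Rlt_dec g g); auto; lra).
    assert (in_b lo hi g = true) by (apply in_b_true; lra).
    rewrite H, H0. simpl. pose proof (cnt_mono lo g hi P ltac:(lra)). unfold cnt in H1. lia.
  - destruct Hin as [Hin|Hin]; [congruence|]. specialize (IH Hin).
    destruct (in_b lo g a) eqn:E1; destruct (in_b lo hi a) eqn:E2; simpl; try lia.
    apply in_b_true in E1. assert (in_b lo hi a = true) by (apply in_b_true; lra). congruence.
Qed.

Lemma cnt_pos lo hi P p : In p P -> lo < p < hi -> (1 <= cnt lo hi P)%nat.
Proof.
  intros. unfold cnt. assert (In p (filter (in_b lo hi) P)) by (apply filter_In; split; auto; apply in_b_true; auto).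
  destruct (filter (in_b lo hi) P); [destruct H1|simpl; lia].
Qed.

Definition seg_ok (P : list R) r t eps (z : R) := exists a b, r <= a <= z /\ z < b <= t /\ b - a <= eps /\
  (forall p, In p P -> ~ (a < p < b)) /\ (a = r \/ In a P) /\ (b = t \/ In b P).

Lemma two_seg (A : R -> Prop) lo0 g t eps : 0 < eps -> lo0 < g < t ->
  ((exists z, A z /\ lo0 <= z < g) -> g - lo0 <= eps) ->
  ((exists z, A z /\ g <= z < t) -> t - g <= eps) ->
  exists ab : R * R, fst ab <= snd ab /\ snd ab - fst ab <= 2 * eps /\
     forall z, A z -> lo0 <= z < t -> fst ab <= z <= snd ab.
Proof.
  intros He Hg H1 H2.
  destruct (classic (exists z, A z /\ lo0 <= z < g)) as [E1|E1];
  destruct (classic (exists z, A z /\ g <= z < t)) as [E2|E2].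
  - exists (lo0, t). simpl. specialize (H1 E1). specialize (H2 E2).
    split; [lra|]. split; [lra|]. intros; lra.
  - exists (lo0, g). simpl. specialize (H1 E1). split; [lra|]. split; [lra|].
    intros z Hz Hz2. destruct (Rlt_dec z g); [lra|]. exfalso. apply E2. exists z. split; auto; lra.
  - exists (g, t). simpl. specialize (H2 E2). split; [lra|]. split; [lra|].
    intros z Hz Hz2. destruct (Rlt_dec z g); [|lra]. exfalso. apply E1. exists z. split; auto; lra.
  - exists (g, g). simpl. split; [lra|]. split; [lra|].
    intros z Hz Hz2. destruct (Rlt_dec z g).
    + exfalso. apply E1. exists z. split; auto; lra.
    + exfalso. apply E2. exists z. split; auto; lra.
Qed.

Lemma claim eps P r : 0 < eps -> forall n t (A : R -> Prop), (cnt r t P <= n)%nat ->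
  (forall z, A z -> r < z < t /\ seg_ok P r t eps z) ->
  exists I : list (R * R), (2 * length I <= n + 2)%nat /\
    (forall ab, In ab I -> fst ab <= snd ab /\ snd ab - fst ab <= 2 * eps) /\
    (forall z, A z -> exists ab, In ab I /\ fst ab <= z <= snd ab).
Proof.
  intros He n. induction n as [n IH] using lt_wf_ind. intros t A Hcnt HA.
  destruct (Nat.eq_dec (cnt r t P) 0) as [H0|H0].
  - destruct (classic (exists z, A z)) as [[z0 Hz0]|Hno].
    + destruct (HA z0 Hz0) as [Hz0r [a [b [Ha [Hb [Hab [Hp [Ha' Hb']]]]]]]].
      assert (b = t).
      { destruct Hb' as [|Hb']; auto. destruct (Rlt_dec b t); [|lra].
        pose proof (cnt_pos r t P b Hb' ltac:(lra)). lia. }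
      assert (a = r).
      { destruct Ha' as [|Ha']; auto. destruct (Rlt_dec r a); [|lra].
        pose proof (cnt_pos r t P a Ha' ltac:(lra)). lia. }
      subst. exists [(r, t)]. simpl. split; [lia|]. split.
      * intros ab [<-|[]]. simpl. lra.
      * intros z Hz. exists (r, t). split; auto. simpl. specialize (HA z Hz). lra.
    + exists []. simpl. split; [lia|]. split; [intros _ []|]. intros z Hz. exfalso; eauto.
  - destruct (cnt_max r t P ltac:(lia)) as [g1 [Hg1P [Hg1 Hg1m]]].
    assert (Htop : (exists z, A z /\ g1 <= z < t) -> t - g1 <= eps).
    { intros [z [Hz Hz2]]. destruct (HA z Hz) as [Hzr [a [b [Ha [Hb [Hab [Hp [Ha' Hb']]]]]]]].
      assert (g1 <= a). { destruct (Rle_dec g1 a); auto. exfalso. apply (Hp g1 Hg1P). lra. }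
      assert (b = t).
      { destruct Hb' as [|Hb']; auto. destruct (Rlt_dec b t); [|lra].
        specialize (Hg1m b Hb' ltac:(lra)). lra. }
      assert (a <= g1).
      { destruct Ha' as [Ha'|Ha']; [lra|]. apply Hg1m; auto; lra. }
      lra. }
    destruct (Nat.eq_dec (cnt r g1 P) 0) as [H1|H1].
    + destruct (two_seg A r g1 t eps He ltac:(lra)) as [ab [Hab1 [Hab2 Hab3]]]; auto.
      { intros [z [Hz Hz2]]. destruct (HA z Hz) as [Hzr [a [b [Ha [Hb [Hab [Hp [Ha' Hb']]]]]]]].
        assert (b <= g1). { destruct (Rle_dec b g1); auto. exfalso. apply (Hp g1 Hg1P). lra. }
        assert (b = g1).
        { destruct Hb' as [|Hb']; [lra|]. destruct (Rlt_dec b g1); [|lra].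
          pose proof (cnt_pos r g1 P b Hb' ltac:(lra)). lia. }
        assert (a = r).
        { destruct Ha' as [|Ha']; auto. destruct (Rlt_dec r a); [|lra].
          pose proof (cnt_pos r g1 P a Ha' ltac:(lra)). lia. }
        lra. }
      exists [ab]. simpl. split; [lia|]. split.
      * intros ab' [<-|[]]. auto.
      * intros z Hz. exists ab. split; auto. apply Hab3; auto. specialize (HA z Hz). lra.
    + destruct (cnt_max r g1 P ltac:(lia)) as [g2 [Hg2P [Hg2 Hg2m]]].
      pose proof (cnt_lt r g1 t P Hg1P Hg1). pose proof (cnt_lt r g2 g1 P Hg2P Hg2).
      destruct (two_seg A g2 g1 t eps He ltac:(lra)) as [ab [Hab1 [Hab2 Hab3]]]; auto.
      { intros [z [Hz Hz2]]. destruct (HA z Hz) as [Hzr [a [b [Ha [Hb [Hab [Hp [Ha' Hb']]]]]]]].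
        assert (g2 <= a). { destruct (Rle_dec g2 a); auto. exfalso. apply (Hp g2 Hg2P). lra. }
        assert (b <= g1). { destruct (Rle_dec b g1); auto. exfalso. apply (Hp g1 Hg1P). lra. }
        assert (b = g1).
        { destruct Hb' as [|Hb']; [lra|]. destruct (Rlt_dec b g1); [|lra].
          specialize (Hg2m b Hb' ltac:(lra)). lra. }
        assert (a = g2).
        { destruct Ha' as [|Ha']; [lra|]. destruct (Rlt_dec g2 a); [|lra].
          specialize (Hg2m a Ha' ltac:(lra)). lra. }
        lra. }
      destruct (IH (n - 2)%nat ltac:(lia) g2 (fun z => A z /\ z < g2)) as [I [HI1 [HI2 HI3]]].
      { lia. }
      { intros z [Hz Hz2]. destruct (HA z Hz) as [Hzr [a [b [Ha [Hb [Hab [Hp [Ha' Hb']]]]]]]].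
        split; [lra|]. exists a, b.
        assert (b <= g2). { destruct (Rle_dec b g2); auto. exfalso. apply (Hp g2 Hg2P). lra. }
        repeat split; auto; try lra.
        destruct Hb' as [Hb'|Hb']; [lra|auto]. }
      exists (ab :: I). simpl. split; [lia|]. split.
      * intros ab' [<-|Hin]; auto.
      * intros z Hz. destruct (Rlt_dec z g2).
        -- destruct (HI3 z (conj Hz r0)) as [ab' [H3 H4]]. exists ab'. auto.
        -- exists ab. split; auto. apply Hab3; auto. specialize (HA z Hz). lra.
Qed.

Lemma responses_same s y z z' (q : list R) N :
  queries s N z y = q -> (forall p, In p q -> resp z' p = resp z p) ->
  forall k, (k <= N)%nat -> responses s z' y k = responses s z y k.
Proof.
  intros Hq Hs k. induction k as [|k IH]; intros Hk; simpl; auto.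
  rewrite IH by lia. f_equal. f_equal. apply Hs. rewrite <- Hq. unfold queries.
  apply in_map_iff. exists k. split; auto. apply in_seq. lia.
Qed.

Lemma acc_all s N eps delta L : in_PhiN N s -> is_private eps delta L N s ->
  forall x y, 0 <= x < 1 -> In y (seq 1 (nseed s)) -> Rabs (xhat s N x y - x) <= eps / 2.
Proof.
  intros [Hn _] [Hacc _] x y Hx Hy.
  pose proof (unif_prob_one_all _ _ Hn (Hacc x Hx) y Hy). simpl in H.
  destruct Rle_dec; auto. discriminate.
Qed.

Lemma Qset_ex s N x q : Qset s N x q -> exists y, In y (seq 1 (nseed s)) /\ queries s N x y = q.
Proof.
  intros H. apply unif_prob_pos_ex in H. destruct H as [y [Hy HP]]. exists y. split; auto.
  destruct list_eq_dec; auto. discriminate.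
Qed.

Lemma Qset_of s N x y : In y (seq 1 (nseed s)) -> Qset s N x (queries s N x y).
Proof.
  intros Hy. apply unif_prob_pos_of with y; auto. destruct list_eq_dec; auto.
Qed.

Lemma cell_lemma s N eps delta L q z : in_PhiN N s -> is_private eps delta L N s ->
  info_set s N q z -> exists e, forall z', 0 <= z' < 1 -> (forall p, In p q -> resp z' p = resp z p) ->
   e - eps / 2 <= z' <= e + eps / 2.
Proof.
  intros HPhi Hpriv [Hz HQ]. destruct (Qset_ex _ _ _ _ HQ) as [y [Hy Hq]].
  exists (xhat s N z y). intros z' Hz' Hs.
  assert (xhat s N z' y = xhat s N z y).
  { unfold xhat. rewrite (responses_same s y z z' q N Hq Hs N (le_n _)). auto. }
  pose proof (acc_all _ _ _ _ _ HPhi Hpriv z' y Hz' Hy). rewrite H in H0.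
  apply Rabs_le_iff in H0. lra.
Qed.

Lemma ex_lo (q : list R) r z : r <= z -> exists a, r <= a <= z /\ (a = r \/ In a q) /\
  forall p, In p q -> r <= p <= z -> p <= a.
Proof.
  intros Hr. induction q as [|p0 q IH].
  - exists r. repeat split; auto; try lra. intros p [].
  - destruct IH as [a [Ha1 [Ha2 Ha3]]].
    destruct (Rle_dec r p0); [destruct (Rle_dec p0 z)|].
    + destruct (Rle_dec a p0).
      * exists p0. repeat split; auto; try lra. right; left; auto.
        intros p [<-|Hp] Hp2; [lra|]. specialize (Ha3 p Hp Hp2). lra.
      * exists a. repeat split; auto; try lra. destruct Ha2; [left|right; right]; auto.
        intros p [<-|Hp] Hp2; [lra|]. auto.
    + exists a. repeat split; auto; try lra. destruct Ha2; [left|right; right]; auto.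
      intros p [<-|Hp] Hp2; [lra|]. auto.
    + exists a. repeat split; auto; try lra. destruct Ha2; [left|right; right]; auto.
      intros p [<-|Hp] Hp2; [lra|]. auto.
Qed.

Lemma ex_hi (q : list R) t z : z < t -> exists b, z < b <= t /\ (b = t \/ In b q) /\
  forall p, In p q -> z < p <= t -> b <= p.
Proof.
  intros Hr. induction q as [|p0 q IH].
  - exists t. repeat split; auto; try lra. intros p [].
  - destruct IH as [a [Ha1 [Ha2 Ha3]]].
    destruct (Rlt_dec z p0); [destruct (Rle_dec p0 t)|].
    + destruct (Rle_dec p0 a).
      * exists p0. repeat split; auto; try lra. right; left; auto.
        intros p [<-|Hp] Hp2; [lra|]. specialize (Ha3 p Hp Hp2). lra.
      * exists a. repeat split; auto; try lra. destruct Ha2; [left|right; right]; auto.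
        intros p [<-|Hp] Hp2; [lra|]. auto.
    + exists a. repeat split; auto; try lra. destruct Ha2; [left|right; right]; auto.
      intros p [<-|Hp] Hp2; [lra|]. auto.
    + exists a. repeat split; auto; try lra. destruct Ha2; [left|right; right]; auto.
      intros p [<-|Hp] Hp2; [lra|]. auto.
Qed.

Lemma seg_from_cell (q : list R) r eps z e : 0 < r -> r < z < 1 ->
  (forall p, In p q -> 0 <= p < 1) ->
  (forall z', 0 <= z' < 1 -> (forall p, In p q -> resp z' p = resp z p) -> e - eps / 2 <= z' <= e + eps / 2) ->
  seg_ok q r 1 eps z.
Proof.
  intros Hr Hz Hq Hc.
  destruct (ex_lo q r z ltac:(lra)) as [a [Ha1 [Ha2 Ha3]]].
  destruct (ex_hi q 1 z ltac:(lra)) as [b [Hb1 [Hb2 Hb3]]].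
  assert (Hcell : forall z', a <= z' < b -> e - eps / 2 <= z' <= e + eps / 2).
  { intros z' Hz'. apply Hc; [lra|]. intros p Hp. specialize (Hq p Hp).
    destruct (Rle_dec p z).
    - rewrite !resp_true; auto. destruct (Rle_dec r p).
      + specialize (Ha3 p Hp ltac:(lra)). lra.
      + lra.
    - rewrite !resp_false; auto; try lra. specialize (Hb3 p Hp ltac:(lra)). lra. }
  exists a, b. repeat split; auto; try lra.
  - pose proof (Hcell a ltac:(lra)).
    destruct (Rle_dec b (e + eps / 2)); [lra|].
    pose proof (Hcell ((e + eps / 2 + b) / 2) ltac:(lra)). lra.
  - intros p Hp Hp2. specialize (Hq p Hp). destruct (Rle_dec p z).
    + specialize (Ha3 p Hp ltac:(lra)). lra.
    + specialize (Hb3 p Hp ltac:(lra)). lra.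
Qed.

Lemma cnt_le_count_ge r t q : (cnt r t q <= count_ge r q)%nat.
Proof.
  unfold cnt, count_ge. induction q as [|a q IH]; simpl; auto.
  destruct (in_b r t a) eqn:E; unfold ge_b at 1; destruct (Rle_dec r a); simpl; try lia.
  apply in_b_true in E. lra.
Qed.

Lemma lb_count s N eps L : in_PhiN N s -> is_private eps (1 / INR L) L N s -> 0 < eps ->
  2 * eps < 1 / INR L -> (3 <= L)%nat ->
  forall x, 0 <= x < 1 / INR L -> (2 * L - 4 <= count_ge (1 / INR L) (queries s N x 1))%nat.
Proof.
  intros HPhi Hpriv He Hel HL x Hx.
  assert (HLr : 0 < 1 / INR L < 1).
  { assert (3 <= INR L) by (replace 3 with (INR 3) by (simpl; lra); apply le_INR; auto).
    split; [apply Rdiv_lt_0_compat; lra|]. apply (Rmult_lt_reg_r (INR L)); [lra|].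
    unfold Rdiv. rewrite Rmult_assoc, Rinv_l by lra. lra. }
  set (r := 1 / INR L) in *.
  set (q := queries s N x 1).
  assert (Hy1 : In 1%nat (seq 1 (nseed s))) by (apply in_seq; destruct HPhi; lia).
  assert (HQ : Qset s N x q) by (apply Qset_of; auto).
  destruct Hpriv as [Hacc Hcov]. pose proof (Hcov x q ltac:(lra) HQ) as Hc.
  assert (Hqr : forall p, In p q -> 0 <= p < 1).
  { intros p Hp. unfold q, queries in Hp. apply in_map_iff in Hp. destruct Hp as [k [<- _]].
    destruct HPhi as [_ [Hqq _]]. apply Hqq. }
  destruct (claim eps q r He (cnt r 1 q) 1 (fun z => info_set s N q z /\ r < z) (le_n _))
    as [I [HI1 [HI2 HI3]]].
  { intros z [Hz Hzr]. split; [destruct Hz as [Hz _]; lra|].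
    destruct (cell_lemma s N eps r L q z HPhi (conj Hacc Hcov) Hz) as [e He'].
    apply seg_from_cell with e; auto; destruct Hz as [Hz _]; lra. }
  assert (Hk : coverable r (info_set s N q) (S (length I))).
  { exists ((0, r) :: I). split; [auto|]. split.
    - intros ab [<-|Hab]; simpl; [lra|]. specialize (HI2 ab Hab). lra.
    - intros z Hz. destruct (Rle_dec z r).
      + exists (0, r). split; [left; auto|]. simpl. destruct Hz as [Hz _]. lra.
      + assert (Hzr : r < z) by lra. destruct (HI3 z (conj Hz Hzr)) as [ab [Hab Hab2]]. exists ab. split; [right|]; auto. }
  specialize (Hc _ Hk). pose proof (cnt_le_count_ge r 1 q). fold q. lia.
Qed.

Lemma lb3 eps L N : 0 < eps -> 2 * eps < 1 / INR L -> (3 <= L)%nat ->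
  has_private eps (1 / INR L) L N ->
  (Rceil (log2 (1 / (INR L * eps))) + 2 * Z.of_nat L - 4 <= Z.of_nat N)%Z.
Proof.
  intros He Hel HL [s [HPhi Hpriv]].
  assert (HL3 : 3 <= INR L) by (replace 3 with (INR 3) by (simpl; lra); apply le_INR; auto).
  assert (HLr : 0 < 1 / INR L < 1).
  { split; [apply Rdiv_lt_0_compat; lra|]. apply (Rmult_lt_reg_r (INR L)); [lra|].
    unfold Rdiv. rewrite Rmult_assoc, Rinv_l by lra. lra. }
  assert (Hy1 : In 1%nat (seq 1 (nseed s))) by (apply in_seq; destruct HPhi; lia).
  destruct (count_bound s N 1 (1 / INR L) (2 * L - 4) eps He ltac:(lra)) as [HW Hb].
  - intros x Hx. apply (acc_all s N eps (1 / INR L) L HPhi Hpriv); auto. lra.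
  - intros x Hx. apply (lb_count s N eps L HPhi Hpriv He Hel HL x Hx).
  - assert (1 / (INR L * eps) <= 2 ^ (N - (2 * L - 4))).
    { replace (1 / (INR L * eps)) with ((1 / INR L) / eps) by (field; lra).
      apply (Rmult_le_reg_r eps); auto. unfold Rdiv at 1. rewrite Rmult_assoc, Rinv_l by lra. lra. }
    apply Rceil_log2_le in H.
    + rewrite Nat2Z.inj_sub in H by lia. lia.
    + apply Rdiv_lt_0_compat; [lra|]. apply Rmult_lt_0_compat; lra.
Qed.

Lemma lb2 eps L N : 0 < eps -> L = 2%nat ->
  has_private eps (1 / INR L) L N -> (Rceil (log2 (1 / eps)) <= Z.of_nat N)%Z.
Proof.
  intros He HL [s [HPhi Hpriv]].
  destruct (count_bound s N 1 1 0 eps He ltac:(lra)) as [HW Hb].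
  - intros x Hx. apply (acc_all s N eps (1 / INR L) L HPhi Hpriv); auto.
    apply in_seq; destruct HPhi; lia.
  - intros; lia.
  - rewrite Nat.sub_0_r in Hb. apply Rceil_log2_le.
    + apply Rdiv_lt_0_compat; lra.
    + apply (Rmult_le_reg_r eps); auto. unfold Rdiv. rewrite Rmult_1_l, Rinv_l by lra. lra.
Qed.

Fixpoint lh (ps : list R) (bs : list bool) (lo hi : R) : R * R :=
  match ps, bs with
  | p :: ps', b :: bs' => if b then lh ps' bs' (Rmax lo p) hi else lh ps' bs' lo (Rmin hi p)
  | _, _ => (lo, hi)
  end.

Fixpoint tqs (lo hi v : R) (n : nat) : list R :=
  match n with
  | O => []
  | S n' => let m := (lo + hi) / 2 in
            m :: (if resp v m then tqs m hi v n' else tqs lo m v n')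
  end.

Fixpoint qb (lo hi : R) (bs : list bool) : R :=
  match bs with
  | [] => (lo + hi) / 2
  | b :: bs' => let m := (lo + hi) / 2 in if b then qb m hi bs' else qb lo m bs'
  end.

Fixpoint bis (lo hi : R) (bs : list bool) : R * R :=
  match bs with
  | [] => (lo, hi)
  | b :: bs' => let m := (lo + hi) / 2 in if b then bis m hi bs' else bis lo m bs'
  end.

Lemma lh_props ps v : forall lo0 hi0, lo0 <= v < hi0 ->
  let lhv := lh ps (map (resp v) ps) lo0 hi0 in
  lo0 <= fst lhv <= v /\ v < snd lhv <= hi0 /\
  forall p, In p ps -> (p <= v -> p <= fst lhv) /\ (v < p -> snd lhv <= p).
Proof.
  induction ps as [|p ps IH]; intros lo0 hi0 Hv; simpl.
  - repeat split; try lra; intros p [].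
  - destruct (Rle_dec p v) as [Hpv|Hpv]; [rewrite (resp_true v p Hpv)|rewrite (resp_false v p ltac:(lra))].
    + assert (Hv' : Rmax lo0 p <= v < hi0) by (split; [apply Rmax_lub|]; lra).
      destruct (IH _ _ Hv') as [H1 [H2 H3]]. pose proof (Rmax_l lo0 p). pose proof (Rmax_r lo0 p).
      split; [lra|]. split; [lra|].
      intros q Hq; split; intros Hq2; destruct Hq as [<-|Hq]; try lra; apply (H3 q Hq); auto.
    + assert (Hv' : lo0 <= v < Rmin hi0 p) by (split; [|apply Rmin_glb_lt]; lra).
      destruct (IH _ _ Hv') as [H1 [H2 H3]]. pose proof (Rmin_l hi0 p). pose proof (Rmin_r hi0 p).
      split; [lra|]. split; [lra|].
      intros q Hq; split; intros Hq2; destruct Hq as [<-|Hq]; try lra; apply (H3 q Hq); auto.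
Qed.

Definition Inv (ab : R * R) := 0 <= fst ab < 1 /\ 0 < snd ab <= 1.

Lemma lh_inv ps : (forall p, In p ps -> 0 < p < 1) -> forall bs lo hi, Inv (lo, hi) -> Inv (lh ps bs lo hi).
Proof.
  intros Hps. induction ps as [|p ps IH]; intros bs lo hi H; destruct bs as [|b bs]; simpl; auto.
  assert (Hp := Hps p (or_introl eq_refl)).
  assert (IH' := IH (fun q Hq => Hps q (or_intror Hq))).
  unfold Inv in *; simpl in *.
  destruct b; apply IH'; simpl.
  - split; [split|]; try lra. apply Rle_trans with lo; [lra|apply Rmax_l]. apply Rmax_lub_lt; lra.
  - split; [|split]; try lra. apply Rmin_glb_lt; lra. apply Rle_trans with hi; [apply Rmin_l|lra].
Qed.

Lemma mid_inv lo hi : Inv (lo, hi) -> Inv ((lo + hi) / 2, hi) /\ Inv (lo, (lo + hi) / 2) /\ 0 <= (lo + hi) / 2 < 1.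
Proof. unfold Inv; simpl; intros; lra. Qed.

Lemma qb_inv bs : forall lo hi, Inv (lo, hi) -> 0 <= qb lo hi bs < 1.
Proof.
  induction bs as [|b bs IH]; intros lo hi H; simpl.
  - apply mid_inv in H; tauto.
  - apply mid_inv in H. destruct b; apply IH; tauto.
Qed.

Lemma bis_inv bs : forall lo hi, Inv (lo, hi) -> Inv (bis lo hi bs).
Proof.
  induction bs as [|b bs IH]; intros lo hi H; simpl; auto.
  apply mid_inv in H. destruct b; apply IH; tauto.
Qed.

Lemma tqs_inv v n : forall lo hi, Inv (lo, hi) -> forall p, In p (tqs lo hi v n) -> 0 <= p < 1.
Proof.
  induction n as [|n IH]; intros lo hi H p Hp; simpl in Hp; [destruct Hp|].
  apply mid_inv in H. destruct Hp as [<-|Hp]; [tauto|].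
  destruct (resp v ((lo + hi) / 2)); eapply IH; eauto; tauto.
Qed.

Lemma tqs_len lo hi v n : length (tqs lo hi v n) = n.
Proof.
  revert lo hi. induction n; intros; simpl; auto. destruct resp; rewrite IHn; auto.
Qed.

Lemma tqs_in v n : forall lo hi, lo < hi -> forall p, In p (tqs lo hi v n) -> lo < p < hi.
Proof.
  induction n as [|n IH]; intros lo hi H p Hp; simpl in Hp; [destruct Hp|].
  destruct Hp as [<-|Hp]; [lra|].
  destruct (resp v ((lo + hi) / 2)); apply IH in Hp; lra.
Qed.

Lemma tqs_nodup v n : forall lo hi, lo < hi -> NoDup (tqs lo hi v n).
Proof.
  induction n as [|n IH]; intros lo hi H; simpl; [constructor|].
  constructor.
  - destruct (resp v ((lo + hi) / 2)); intro Hin; apply tqs_in in Hin; lra.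
  - destruct (resp v ((lo + hi) / 2)); apply IH; lra.
Qed.

Lemma tqs_same u v n : forall lo hi, (forall p, In p (tqs lo hi v n) -> resp u p = resp v p) ->
  tqs lo hi u n = tqs lo hi v n.
Proof.
  induction n as [|n IH]; intros lo hi H; simpl; auto.
  rewrite (H ((lo + hi) / 2) (or_introl eq_refl)). f_equal.
  destruct (resp v ((lo + hi) / 2)) eqn:E; apply IH; intros p Hp; apply H; right; simpl; rewrite E; auto.
Qed.

Lemma tqs_fin v n : forall lo hi, lo <= v < hi ->
  let ab := bis lo hi (map (resp v) (tqs lo hi v n)) in
  lo <= fst ab <= v /\ v < snd ab <= hi /\ snd ab - fst ab = (hi - lo) / 2 ^ n /\
  forall p, In p (tqs lo hi v n) -> (p <= v -> p <= fst ab) /\ (v < p -> snd ab <= p).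
Proof.
  induction n as [|n IH]; intros lo hi Hv; simpl.
  - repeat split; try lra; intros p [].
  - destruct (Rle_dec ((lo + hi) / 2) v) as [Hpv|Hpv];
      [rewrite (resp_true v _ Hpv)|rewrite (resp_false v ((lo + hi) / 2) ltac:(lra))]; simpl.
    + destruct (IH ((lo + hi) / 2) hi ltac:(lra)) as [H1 [H2 [H3 H4]]].
      split; [lra|]. split; [lra|]. split.
      * rewrite H3. field. apply pow_nonzero. lra.
      * intros q Hq; split; intros Hq2; destruct Hq as [<-|Hq]; try lra; apply (H4 q Hq); auto.
    + destruct (IH lo ((lo + hi) / 2) ltac:(lra)) as [H1 [H2 [H3 H4]]].
      split; [lra|]. split; [lra|]. split.
      * rewrite H3. field. apply pow_nonzero. lra.
      * intros q Hq; split; intros Hq2; destruct Hq as [<-|Hq]; try lra; apply (H4 q Hq); auto.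
Qed.

Lemma qb_tqs v n : forall lo hi j, (j < n)%nat ->
  qb lo hi (map (resp v) (firstn j (tqs lo hi v n))) = nth j (tqs lo hi v n) 0.
Proof.
  induction n as [|n IH]; intros lo hi j Hj; [lia|].
  destruct j as [|j]; simpl; auto.
  destruct (resp v ((lo + hi) / 2)); apply IH; lia.
Qed.

Lemma firstn_S_snoc {A} (l : list A) k d : (k < length l)%nat -> firstn (S k) l = firstn k l ++ [nth k l d].
Proof.
  revert k. induction l as [|a l IH]; intros k Hk; simpl in Hk; [lia|].
  destruct k as [|k]; [simpl; auto|]. rewrite firstn_cons. rewrite (IH k) by lia. reflexivity.
Qed.

Lemma pre_F {A} (F G : list A) k : (length F <= k)%nat -> firstn (length F) (firstn k (F ++ G)) = F.
Proof.
  intros H. rewrite firstn_firstn. replace (Nat.min (length F) k) with (length F + 0)%nat by lia.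
  rewrite firstn_app_2. simpl. apply app_nil_r.
Qed.

Lemma post_F {A} (F G : list A) k : (length F <= k)%nat -> skipn (length F) (firstn k (F ++ G)) = firstn (k - length F) G.
Proof.
  intros H. replace k with (length F + (k - length F))%nat at 1 by lia.
  rewrite firstn_app_2. rewrite skipn_app. rewrite skipn_all, Nat.sub_diag. simpl. auto.
Qed.

Lemma pre0 {A} (F G : list A) : firstn (length F) (F ++ G) = F.
Proof. replace (length F) with (length F + 0)%nat by lia. rewrite firstn_app_2. simpl. apply app_nil_r. Qed.

Lemma post0 {A} (F G : list A) : skipn (length F) (F ++ G) = G.
Proof. rewrite skipn_app, skipn_all, Nat.sub_diag. auto. Qed.

Lemma map_seq_eq {A} (f : nat -> A) (l : list A) d : (forall k, (k < length l)%nat -> f k = nth k l d) ->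
  map f (seq 0 (length l)) = l.
Proof.
  intros H. apply nth_ext with (d := f 0%nat) (d' := d).
  - rewrite length_map, length_seq. auto.
  - intros n Hn. rewrite length_map, length_seq in Hn. rewrite map_nth, seq_nth by auto. simpl. auto.
Qed.

Definition Fg L : list R := map (fun k => INR (S k) / INR L) (seq 0 (L - 1)).
Definition Fa L e : list R := map (fun k => INR k / INR L + e) (seq 0 L).
Definition Fl L e : list R := Fg L ++ Fa L e.

Definition LHx L e v := lh (Fl L e) (map (resp v) (Fl L e)) 0 1.
Definition fake (M y : nat) : R := INR (y - 1) / INR M.
Definition FT L e T M y : list R :=
  let u := fake M y in tqs (fst (LHx L e u)) (snd (LHx L e u)) u T.
Definition anchor e (ab : R * R) : bool := if Rle_dec (snd ab - fst ab) e then true else false.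

Definition mkS L e T M : strategy := Strategy M
  (fun rs y => let nF := length (Fl L e) in
     if lt_dec (length rs) nF then nth (length rs) (Fl L e) 0 else
     let ab := lh (Fl L e) (firstn nF rs) 0 1 in
     if anchor e ab then nth (length rs - nF) (FT L e T M y) 0
     else qb (fst ab) (snd ab) (skipn nF rs))
  (fun rs y => let nF := length (Fl L e) in
     let ab := lh (Fl L e) (firstn nF rs) 0 1 in
     if anchor e ab then (fst ab + snd ab) / 2
     else let cd := bis (fst ab) (snd ab) (skipn nF rs) in (fst cd + snd cd) / 2).

Definition TQ L e T M x y : list R :=
  if anchor e (LHx L e x) then FT L e T M y
  else tqs (fst (LHx L e x)) (snd (LHx L e x)) x T.

Lemma TQ_len L e T M x y : length (TQ L e T M x y) = T.
Proof. unfold TQ, FT. destruct anchor; apply tqs_len. Qed.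

Lemma query_run L e T M x y k : (k < length (Fl L e) + T)%nat ->
  query (mkS L e T M) (map (resp x) (firstn k (Fl L e ++ TQ L e T M x y))) y =
  nth k (Fl L e ++ TQ L e T M x y) 0.
Proof.
  intros Hk. simpl.
  assert (Hlen : length (map (resp x) (firstn k (Fl L e ++ TQ L e T M x y))) = k).
  { rewrite length_map, length_firstn, length_app, TQ_len. lia. }
  rewrite Hlen.
  destruct (lt_dec k (length (Fl L e))) as [H1|H1].
  - rewrite app_nth1; auto.
  - rewrite firstn_map, pre_F by lia. fold (LHx L e x).
    rewrite app_nth2 by lia.
    unfold TQ. destruct (anchor e (LHx L e x)); auto.
    rewrite skipn_map, post_F by lia. apply qb_tqs. lia.
Qed.

Lemma run L e T M x y : forall k, (k <= length (Fl L e) + T)%nat ->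
  responses (mkS L e T M) x y k = map (resp x) (firstn k (Fl L e ++ TQ L e T M x y)).
Proof.
  induction k as [|k IH]; intros Hk; [simpl; auto|]. cbn [responses].
  rewrite IH by lia. rewrite query_run by lia.
  rewrite (firstn_S_snoc _ k 0) by (rewrite length_app, TQ_len; lia).
  rewrite map_app. auto.
Qed.

Lemma queries_run L e T M x y :
  queries (mkS L e T M) (length (Fl L e) + T) x y = Fl L e ++ TQ L e T M x y.
Proof.
  unfold queries.
  replace (length (Fl L e) + T)%nat with (length (Fl L e ++ TQ L e T M x y)) by (rewrite length_app, TQ_len; auto).
  apply map_seq_eq with (d := 0). intros k Hk. rewrite length_app, TQ_len in Hk.
  rewrite run by lia. apply query_run. auto.
Qed.

Lemma xhat_run L e T M x y :
  xhat (mkS L e T M) (length (Fl L e) + T) x y =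
  if anchor e (LHx L e x) then (fst (LHx L e x) + snd (LHx L e x)) / 2
  else let cd := bis (fst (LHx L e x)) (snd (LHx L e x)) (map (resp x) (TQ L e T M x y)) in (fst cd + snd cd) / 2.
Proof.
  unfold xhat. rewrite run by lia.
  rewrite firstn_all2 by (rewrite length_app, TQ_len; lia).
  simpl. rewrite firstn_map, skipn_map, pre0, post0. fold (LHx L e x). auto.
Qed.

Lemma floor_ex : forall n x, 0 <= x < INR n -> exists j, (j < n)%nat /\ INR j <= x < INR j + 1.
Proof.
  induction n as [|n IH]; intros x Hx; [simpl in Hx; lra|].
  rewrite S_INR in Hx.
  destruct (Rlt_dec x (INR n)).
  - destruct (IH x ltac:(lra)) as [j [Hj1 Hj2]]. exists j. split; auto.
  - exists n. split; [lia|lra].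
Qed.

Lemma INR_lt_S i j : (i < j)%nat -> INR i + 1 <= INR j.
Proof. intros H. rewrite <- S_INR. apply le_INR. lia. Qed.

Lemma grid_point (M : nat) a b : 0 < INR M -> 0 <= a -> a < b -> b <= 1 -> 1 / INR M < b - a ->
  exists j, (j < M)%nat /\ a <= INR j / INR M < b.
Proof.
  intros HM Ha Hab Hb Hd.
  destruct (floor_ex M (a * INR M)) as [j0 [Hj1 Hj2]].
  { split; [apply Rmult_le_pos; lra|]. assert (a < 1) by lra. nra. }
  assert (H1 : a < INR (S j0) / INR M).
  { rewrite S_INR. apply (Rmult_lt_reg_r (INR M)); auto. unfold Rdiv. rewrite Rmult_assoc, Rinv_l; lra. }
  assert (H2 : INR (S j0) / INR M < b).
  { assert (INR (S j0) / INR M <= a + 1 / INR M).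
    { rewrite S_INR. replace ((INR j0 + 1) / INR M) with (INR j0 / INR M + 1 / INR M) by (field; lra).
      assert (INR j0 / INR M <= a); [|lra].
      apply (Rmult_le_reg_r (INR M)); auto. unfold Rdiv. rewrite Rmult_assoc, Rinv_l, Rmult_1_r; lra. }
    lra. }
  exists (S j0). split; [|lra].
  assert (INR (S j0) < INR M).
  { apply (Rmult_lt_reg_r (/ INR M)). apply Rinv_0_lt_compat; auto.
    rewrite Rinv_r by lra. unfold Rdiv in H2. lra. }
  apply INR_lt; auto.
Qed.

Definition pdec : forall x y : R * R, {x = y} + {x <> y}.
Proof. intros [a b] [c d]. destruct (Req_EM_T a c); destruct (Req_EM_T b d); subst; auto;
  right; intro H; inversion H; auto. Defined.

Lemma pigeon (delta : R) (Z : list R) : NoDup Z ->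
  (forall z1 z2, In z1 Z -> In z2 Z -> z1 <> z2 -> delta < Rabs (z1 - z2)) ->
  forall I : list (R * R), (forall ab, In ab I -> snd ab - fst ab <= delta) ->
  (forall z, In z Z -> exists ab, In ab I /\ fst ab <= z <= snd ab) -> (length Z <= length I)%nat.
Proof.
  induction Z as [|z Z IH]; intros HND Hsep I HI Hcov; simpl; [lia|].
  inversion HND; subst.
  destruct (Hcov z (or_introl eq_refl)) as [ab [Hab1 Hab2]].
  assert (Hlt := remove_length_lt pdec I ab Hab1).
  assert (length Z <= length (remove pdec ab I))%nat; [|lia].
  apply IH; auto.
  - intros; apply Hsep; auto; right; auto.
  - intros ab' Hab'. apply in_remove in Hab'. apply HI. tauto.
  - intros z' Hz'. destruct (Hcov z' (or_intror Hz')) as [ab' [Hc1 Hc2]].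
    exists ab'. split; auto. apply in_in_remove; auto. intro; subst ab'.
    assert (z <> z') by (intro; subst; auto).
    specialize (Hsep z z' (or_introl eq_refl) (or_intror Hz') H).
    specialize (HI ab Hab1).
    unfold Rabs in Hsep. destruct Rcase_abs; lra.
Qed.

Lemma NoDup_map_inj {A B} (f : A -> B) (l : list A) : NoDup l ->
  (forall a b, In a l -> In b l -> f a = f b -> a = b) -> NoDup (map f l).
Proof.
  induction l as [|a l IH]; intros HN Hf; simpl; constructor.
  - inversion HN; subst. intro Hin. apply in_map_iff in Hin. destruct Hin as [b [Hb1 Hb2]].
    assert (b = a) by (apply Hf; simpl; auto). subst. auto.
  - inversion HN; subst. apply IH; auto. intros; apply Hf; simpl; auto.
Qed.

Lemma Rdiv_le_0_compat a b : 0 <= a -> 0 < b -> 0 <= a / b.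
Proof. intros; unfold Rdiv; apply Rmult_le_pos; [|left; apply Rinv_0_lt_compat]; auto. Qed.

Lemma Fl_len L e : (1 <= L)%nat -> length (Fl L e) = (2 * L - 1)%nat.
Proof. intros. unfold Fl, Fg, Fa. rewrite length_app, !length_map, !length_seq. lia. Qed.

Lemma Fl_bounds L e : (2 <= L)%nat -> 0 < e -> 2 * e < 1 / INR L ->
  forall p, In p (Fl L e) -> 0 < p < 1.
Proof.
  intros HL He Hel p Hp. assert (HLr : 2 <= INR L) by (replace 2 with (INR 2) by (simpl; lra); apply le_INR; auto).
  unfold Fl, Fg, Fa in Hp. apply in_app_or in Hp. destruct Hp as [Hp|Hp];
  apply in_map_iff in Hp; destruct Hp as [k [<- Hk]]; apply in_seq in Hk.
  - assert (INR (S k) + 1 <= INR L) by (apply INR_lt_S; lia).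
    assert (0 < INR (S k)) by (apply lt_0_INR; lia).
    split; [apply Rdiv_lt_0_compat; lra|].
    apply (Rmult_lt_reg_r (INR L)); [lra|]. unfold Rdiv. rewrite Rmult_assoc, Rinv_l by lra. lra.
  - assert (INR k + 1 <= INR L) by (apply INR_lt_S; lia).
    assert (0 <= INR k) by apply pos_INR.
    assert (INR k / INR L + 1 / INR L <= 1).
    { replace (INR k / INR L + 1 / INR L) with ((INR k + 1) / INR L) by (field; lra).
      apply (Rmult_le_reg_r (INR L)); [lra|]. unfold Rdiv. rewrite Rmult_assoc, Rinv_l by lra. lra. }
    assert (0 <= INR k / INR L) by (apply Rdiv_le_0_compat; lra).
    split; lra.
Qed.

Lemma grid_in L e j : (1 <= j < L)%nat -> In (INR j / INR L) (Fl L e).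
Proof.
  intros Hj. unfold Fl. apply in_or_app. left. unfold Fg. apply in_map_iff.
  exists (j - 1)%nat. split.
  - f_equal. f_equal. lia.
  - apply in_seq. lia.
Qed.

Lemma anchor_in L e k : (k < L)%nat -> In (INR k / INR L + e) (Fl L e).
Proof.
  intros Hk. unfold Fl. apply in_or_app. right. unfold Fa. apply in_map_iff.
  exists k. split; auto. apply in_seq. lia.
Qed.

Lemma LHx_props L e v : 0 <= v < 1 ->
  0 <= fst (LHx L e v) <= v /\ v < snd (LHx L e v) <= 1 /\
  forall p, In p (Fl L e) -> (p <= v -> p <= fst (LHx L e v)) /\ (v < p -> snd (LHx L e v) <= p).
Proof. intros Hv. apply lh_props. auto. Qed.

Lemma LHx_width L e v : (2 <= L)%nat -> 0 <= v < 1 -> snd (LHx L e v) - fst (LHx L e v) <= 1 / INR L.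
Proof.
  intros HL Hv. assert (HLr : 2 <= INR L) by (replace 2 with (INR 2) by (simpl; lra); apply le_INR; auto).
  destruct (LHx_props L e v Hv) as [H1 [H2 H3]].
  destruct (floor_ex L (v * INR L)) as [j [Hj1 Hj2]].
  { split; [apply Rmult_le_pos; lra|]. nra. }
  assert (Hlo : INR j / INR L <= fst (LHx L e v)).
  { destruct j as [|j].
    - simpl. unfold Rdiv. rewrite Rmult_0_l. lra.
    - apply (H3 _ (grid_in L e (S j) ltac:(lia))).
      apply (Rmult_le_reg_r (INR L)); [lra|]. unfold Rdiv. rewrite Rmult_assoc, Rinv_l by lra. lra. }
  assert (Hhi : snd (LHx L e v) <= (INR j + 1) / INR L).
  { destruct (Nat.eq_dec (S j) L) as [E|E].
    - replace ((INR j + 1) / INR L) with 1 by (rewrite <- S_INR, E; field; lra). lra.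
    - rewrite <- S_INR. apply (H3 _ (grid_in L e (S j) ltac:(lia))).
      rewrite S_INR. apply (Rmult_lt_reg_r (INR L)); [lra|]. unfold Rdiv. rewrite Rmult_assoc, Rinv_l by lra. lra. }
  replace (1 / INR L) with ((INR j + 1) / INR L - INR j / INR L) by (field; lra). lra.
Qed.

Definition zk L e (k : nat) : R := INR k / INR L + INR k * e / (2 * INR L).

Lemma zk_props L e k : (2 <= L)%nat -> 0 < e -> 2 * e < 1 / INR L -> (k < L)%nat ->
  0 <= zk L e k < 1 /\ anchor e (LHx L e (zk L e k)) = true.
Proof.
  intros HL He Hel Hk. assert (HLr : 2 <= INR L) by (replace 2 with (INR 2) by (simpl; lra); apply le_INR; auto).
  assert (Hk1 : INR k + 1 <= INR L) by (apply INR_lt_S; lia).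
  assert (Hk0 : 0 <= INR k) by apply pos_INR.
  assert (Hz1 : INR k / INR L <= zk L e k).
  { unfold zk. assert (0 <= INR k * e / (2 * INR L)); [|lra].
    apply Rdiv_le_0_compat; [nra|lra]. }
  assert (Hz2 : zk L e k < INR k / INR L + e).
  { unfold zk. assert (INR k * e / (2 * INR L) < e); [|lra].
    apply (Rmult_lt_reg_r (2 * INR L)); [lra|]. unfold Rdiv. rewrite Rmult_assoc, Rinv_l by lra. nra. }
  assert (Hkl : INR k / INR L + 1 / INR L <= 1).
  { replace (INR k / INR L + 1 / INR L) with ((INR k + 1) / INR L) by (field; lra).
    apply (Rmult_le_reg_r (INR L)); [lra|]. unfold Rdiv. rewrite Rmult_assoc, Rinv_l by lra. lra. }
  assert (0 <= INR k / INR L) by (apply Rdiv_le_0_compat; lra).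
  assert (Hv : 0 <= zk L e k < 1) by lra.
  split; auto.
  destruct (LHx_props L e _ Hv) as [H1 [H2 H3]].
  assert (INR k / INR L <= fst (LHx L e (zk L e k))).
  { destruct k as [|k].
    - simpl. unfold Rdiv. rewrite Rmult_0_l. lra.
    - apply (H3 _ (grid_in L e (S k) ltac:(lia))). lra. }
  assert (snd (LHx L e (zk L e k)) <= INR k / INR L + e).
  { apply (H3 _ (anchor_in L e k Hk)). lra. }
  unfold anchor. destruct Rle_dec; auto. lra.
Qed.

Lemma zk_sep L e i j : (2 <= L)%nat -> 0 < e -> i <> j ->
  1 / INR L < Rabs (zk L e i - zk L e j).
Proof.
  intros HL He Hij. assert (HLr : 2 <= INR L) by (replace 2 with (INR 2) by (simpl; lra); apply le_INR; auto).
  assert (E : forall a, zk L e a = INR a * ((1 + e / 2) / INR L)).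
  { intros. unfold zk. field. lra. }
  rewrite !E. rewrite <- Rmult_minus_distr_r.
  rewrite Rabs_mult. rewrite (Rabs_right ((1 + e / 2) / INR L)) by (apply Rle_ge, Rdiv_le_0_compat; lra).
  assert (1 <= Rabs (INR i - INR j)).
  { destruct (Nat.lt_ge_cases i j).
    - apply INR_lt_S in H. rewrite Rabs_left by lra. lra.
    - assert (j < i)%nat by lia. apply INR_lt_S in H0. rewrite Rabs_right by lra. lra. }
  assert (1 / INR L < (1 + e / 2) / INR L).
  { unfold Rdiv. apply Rmult_lt_compat_r. apply Rinv_0_lt_compat; lra. lra. }
  assert (0 < (1 + e / 2) / INR L) by (apply Rdiv_lt_0_compat; lra).
  nra.
Qed.

Lemma Fl_nodup L e : (2 <= L)%nat -> 0 < e -> 2 * e < 1 / INR L -> NoDup (Fl L e).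
Proof.
  intros HL He Hel. assert (HLr : 2 <= INR L) by (replace 2 with (INR 2) by (simpl; lra); apply le_INR; auto).
  assert (HeL : 0 < e * INR L < 1).
  { split; [nra|]. apply (Rmult_lt_compat_r (INR L)) in Hel; [|lra].
    replace (1 / INR L * INR L) with 1 in Hel by (field; lra). lra. }
  unfold Fl, Fg, Fa. apply NoDup_app.
  - apply NoDup_map_inj; [apply seq_NoDup|]. intros a b _ _ H.
    assert (INR (S a) = INR (S b)).
    { apply (Rmult_eq_reg_r (/ INR L)); auto. apply Rinv_neq_0_compat; lra. }
    apply INR_eq in H0. lia.
  - apply NoDup_map_inj; [apply seq_NoDup|]. intros a b _ _ H.
    assert (INR a = INR b).
    { apply (Rmult_eq_reg_r (/ INR L)); [|apply Rinv_neq_0_compat; lra]. unfold Rdiv in H. lra. }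
    apply INR_eq in H0. lia.
  - intros p Hp1 Hp2. apply in_map_iff in Hp1. destruct Hp1 as [a [<- _]].
    apply in_map_iff in Hp2. destruct Hp2 as [b [Hb _]].
    assert (INR (S a) = INR b + e * INR L).
    { apply (Rmult_eq_reg_r (/ INR L)); [|apply Rinv_neq_0_compat; lra].
      rewrite Rmult_plus_distr_r. rewrite (Rmult_assoc e), Rinv_r, Rmult_1_r by lra.
      unfold Rdiv in Hb. lra. }
    destruct (Nat.lt_ge_cases b (S a)).
    + apply INR_lt_S in H0. lra.
    + apply le_INR in H0. lra.
Qed.

Lemma nth_bound (l : list R) k : (forall p, In p l -> 0 <= p < 1) -> 0 <= nth k l 0 < 1.
Proof.
  intros H. destruct (lt_dec k (length l)).
  - apply H. apply nth_In. auto.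
  - rewrite nth_overflow by lia. lra.
Qed.

Lemma Inv_LH L e bs : (2 <= L)%nat -> 0 < e -> 2 * e < 1 / INR L -> Inv (lh (Fl L e) bs 0 1).
Proof.
  intros. apply lh_inv. apply Fl_bounds; auto. unfold Inv; simpl; lra.
Qed.

Lemma TQ_form L e T M x y : 0 <= x < 1 -> (1 <= y <= M)%nat ->
  exists v, 0 <= v < 1 /\ TQ L e T M x y = tqs (fst (LHx L e v)) (snd (LHx L e v)) v T.
Proof.
  intros Hx Hy. unfold TQ. destruct (anchor e (LHx L e x)).
  - exists (fake M y). split; auto. unfold fake.
    assert (INR (y - 1) + 1 <= INR M) by (apply INR_lt_S; lia).
    assert (0 <= INR (y - 1)) by apply pos_INR.
    split; [apply Rdiv_le_0_compat; lra|].
    apply (Rmult_lt_reg_r (INR M)); [lra|]. unfold Rdiv. rewrite Rmult_assoc, Rinv_l by lra. lra.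
  - exists x. auto.
Qed.

Lemma ub L e T : (2 <= L)%nat -> 0 < e -> 2 * e < 1 / INR L -> (1 / INR L) / 2 ^ T <= e ->
  has_private e (1 / INR L) L (length (Fl L e) + T).
Proof.
  intros HL He Hel HT.
  assert (HLr : 2 <= INR L) by (replace 2 with (INR 2) by (simpl; lra); apply le_INR; auto).
  assert (H2T : 0 < 2 ^ T) by (apply pow_lt; lra).
  destruct (INR_archimed 1 (2 ^ T / e) ltac:(lra)) as [M HM]. rewrite Rmult_1_r in HM.
  assert (HMp : 0 < INR M).
  { assert (0 < 2 ^ T / e) by (apply Rdiv_lt_0_compat; lra). lra. }
  assert (HM1 : (1 <= M)%nat). { destruct M; [simpl in HMp; lra|lia]. }
  exists (mkS L e T M). split.
  - split; [simpl; auto|]. split; [|split].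
    + intros rs y. simpl. destruct lt_dec.
      * apply nth_bound. intros p Hp. pose proof (Fl_bounds L e HL He Hel p Hp). lra.
      * destruct anchor.
        -- apply nth_bound. unfold FT. apply tqs_inv. apply Inv_LH; auto.
        -- apply qb_inv. pose proof (Inv_LH L e (firstn (length (Fl L e)) rs) HL He Hel).
           destruct (lh (Fl L e) (firstn (length (Fl L e)) rs) 0 1). auto.
    + intros rs y. simpl. pose proof (Inv_LH L e (firstn (length (Fl L e)) rs) HL He Hel) as HI.
      destruct (lh (Fl L e) (firstn (length (Fl L e)) rs) 0 1) as [lo hi]. simpl.
      destruct anchor.
      * apply mid_inv in HI. tauto.
      * pose proof (bis_inv (skipn (length (Fl L e)) rs) lo hi HI) as HI'.
        destruct (bis lo hi _) as [c d]. apply mid_inv in HI'. simpl. tauto.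
    + intros x y Hx Hy. rewrite queries_run. simpl in Hy.
      destruct (TQ_form L e T M x y Hx Hy) as [v [Hv Hq]]. rewrite Hq.
      destruct (LHx_props L e v Hv) as [H1 [H2 H3]].
      apply NoDup_app.
      * apply Fl_nodup; auto.
      * apply tqs_nodup. lra.
      * intros p Hp Hp2. apply tqs_in in Hp2; [|lra]. destruct (H3 p Hp).
        destruct (Rle_dec p v) as [r|r]; [specialize (H r)|assert (v < p) as r' by lra; specialize (H0 r')]; lra.
  - split.
    + intros x Hx. apply unif_prob_one_of; [simpl; auto|]. intros y _.
      rewrite xhat_run. destruct (LHx_props L e x Hx) as [H1 [H2 H3]].
      assert (Hw := LHx_width L e x HL Hx).
      destruct Rle_dec as [|Hn]; auto. exfalso. apply Hn.
      destruct (anchor e (LHx L e x)) eqn:Ea.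
      * unfold anchor in Ea. destruct Rle_dec in Ea; [|discriminate].
        apply Rabs_le. lra.
      * unfold TQ. rewrite Ea.
        destruct (tqs_fin x T (fst (LHx L e x)) (snd (LHx L e x)) ltac:(lra)) as [K1 [K2 [K3 K4]]].
        assert ((snd (LHx L e x) - fst (LHx L e x)) / 2 ^ T <= (1 / INR L) / 2 ^ T).
        { unfold Rdiv. apply Rmult_le_compat_r; [left; apply Rinv_0_lt_compat; auto|]. lra. }
        apply Rabs_le. lra.
    + intros x qs Hx HQ. destruct (Qset_ex _ _ _ _ HQ) as [y [Hy Hq]].
      rewrite queries_run in Hq.
      assert (Hy' : exists y', In y' (seq 1 (nseed (mkS L e T M))) /\ TQ L e T M x y = FT L e T M y').
      { unfold TQ. destruct (anchor e (LHx L e x)) eqn:Ea; [exists y; auto|].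
        destruct (LHx_props L e x Hx) as [H1 [H2 H3]].
        set (lo := fst (LHx L e x)) in *. set (hi := snd (LHx L e x)) in *.
        destruct (tqs_fin x T lo hi ltac:(lra)) as [K1 [K2 [K3 K4]]].
        set (ab := bis lo hi (map (resp x) (tqs lo hi x T))) in *.
        assert (Hwide : e < hi - lo).
        { unfold anchor in Ea. destruct Rle_dec in Ea; [discriminate|]. unfold lo, hi. lra. }
        assert (Hab : 1 / INR M < snd ab - fst ab).
        { rewrite K3. apply Rlt_le_trans with (e / 2 ^ T).
          - apply (Rmult_lt_reg_r (INR M * 2 ^ T / e)). { apply Rdiv_lt_0_compat; nra. }
            replace (1 / INR M * (INR M * 2 ^ T / e)) with (2 ^ T / e) by (field; lra).
            replace (e / 2 ^ T * (INR M * 2 ^ T / e)) with (INR M) by (field; lra). lra.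
          - unfold Rdiv. apply Rmult_le_compat_r; [left; apply Rinv_0_lt_compat; auto|]. lra. }
        destruct (grid_point M (fst ab) (snd ab) HMp ltac:(lra) ltac:(lra) ltac:(lra) Hab) as [j [Hj1 Hj2]].
        exists (S j). split; [simpl; apply in_seq; lia|].
        unfold FT. unfold fake. replace (S j - 1)%nat with j by lia.
        set (u := INR j / INR M) in *.
        assert (Hlh : LHx L e u = LHx L e x).
        { unfold LHx. f_equal. apply map_ext_in. intros p Hp. destruct (H3 p Hp).
          destruct (Rle_dec p x).
          - specialize (H r). rewrite !resp_true; auto. fold lo in H. lra.
          - assert (x < p) as H4 by lra. specialize (H0 H4). rewrite !resp_false; auto. fold hi in H0. lra. }
        rewrite Hlh. fold lo hi. symmetry. apply tqs_same. intros p Hp. destruct (K4 p Hp).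
        destruct (Rle_dec p x).
        - rewrite !resp_true; auto. specialize (H r). lra.
        - assert (x < p) as H4 by lra. rewrite !resp_false; auto. specialize (H0 H4). lra. }
      destruct Hy' as [y' [Hy'1 Hy'2]].
      intros k [I [HIl [HI1 HI2]]]. subst k.
      set (Z := map (zk L e) (seq 0 L)).
      assert (HZ : length Z = L) by (unfold Z; rewrite length_map, length_seq; auto).
      rewrite <- HZ. apply (pigeon (1 / INR L)).
      * unfold Z. apply NoDup_map_inj; [apply seq_NoDup|]. intros a b _ _ Hab.
        destruct (Nat.eq_dec a b); auto. pose proof (zk_sep L e a b HL He n). rewrite Hab in H.
        rewrite Rminus_diag, Rabs_R0 in H. assert (0 < 1 / INR L) by (apply Rdiv_lt_0_compat; lra). lra.
      * intros z1 z2 Hz1 Hz2 Hne. unfold Z in Hz1, Hz2. apply in_map_iff in Hz1, Hz2.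
        destruct Hz1 as [i [<- _]]. destruct Hz2 as [j [<- _]].
        apply zk_sep; auto; intro; subst; auto.
      * intros ab Hab. apply HI1; auto.
      * intros z Hz. apply HI2. unfold Z in Hz. apply in_map_iff in Hz. destruct Hz as [k [<- Hk]].
        apply in_seq in Hk. destruct (zk_props L e k HL He Hel ltac:(lia)) as [Hz1 Hz2].
        split; auto. rewrite <- Hq.
        replace (Fl L e ++ TQ L e T M x y) with (queries (mkS L e T M) (length (Fl L e) + T) (zk L e k) y').
        -- apply Qset_of; auto.
        -- rewrite queries_run. unfold TQ at 1. rewrite Hz2. rewrite Hy'2. auto.
Qed.

Lemma log2_mono x y : 0 < x -> x <= y -> log2 x <= log2 y.
Proof.
  intros Hx Hxy. unfold log2. pose proof ln2_pos.
  assert (ln x <= ln y).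
  { destruct (Rle_lt_or_eq_dec _ _ Hxy) as [H'|H'].
    - left. apply ln_increasing; auto.
    - rewrite H'. lra. }
  unfold Rdiv. apply Rmult_le_compat_r; auto. left. apply Rinv_0_lt_compat; auto.
Qed.

Theorem corollary1 (eps : R) (L : nat) :
  0 < eps -> (2 <= L)%nat -> 2 * eps < 1 / INR L ->
  ((L = 2%nat ->
    exists n, is_Nstar eps (1 / INR L) L n /\
      (Rceil (log2 (1 / eps)) <= Z.of_nat n <= Rceil (log2 (1 / eps)) + 4)%Z) /\
   ((3 <= L)%nat ->
    exists n, is_Nstar eps (1 / INR L) L n /\
      (Rceil (log2 (1 / (INR L * eps))) + 2 * Z.of_nat L - 4 <= Z.of_nat n <=
       Rceil (log2 (1 / (INR L * eps))) + 2 * Z.of_nat L)%Z)).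
Proof.
  intros He HL Hel.
  assert (HLr : 2 <= INR L) by (replace 2 with (INR 2) by (simpl; lra); apply le_INR; auto).
  assert (Hy : 1 < 1 / (INR L * eps)).
  { assert (INR L * eps < 1 / 2).
    { apply (Rmult_lt_compat_r (INR L)) in Hel; [|lra].
      replace (1 / INR L * INR L) with 1 in Hel by (field; lra). lra. }
    apply (Rmult_lt_reg_r (INR L * eps)); [nra|].
    replace (1 / (INR L * eps) * (INR L * eps)) with 1 by (field; lra). lra. }
  destruct (pow_ge_Rceil_log2 _ Hy) as [Hc0 HcT].
  set (c := Rceil (log2 (1 / (INR L * eps)))) in *.
  set (T := Z.to_nat c) in *.
  assert (HT : (1 / INR L) / 2 ^ T <= eps).
  { assert (H2T : 0 < 2 ^ T) by (apply pow_lt; lra).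
    apply (Rmult_le_reg_r (2 ^ T / eps)); [apply Rdiv_lt_0_compat; lra|].
    replace (1 / INR L / 2 ^ T * (2 ^ T / eps)) with (1 / (INR L * eps)) by (field; repeat split; lra).
    replace (eps * (2 ^ T / eps)) with (2 ^ T) by (field; lra). lra. }
  pose proof (ub L eps T HL He Hel HT) as Hub.
  rewrite Fl_len in Hub by lia.
  destruct (least_nat (has_private eps (1 / INR L) L) (ex_intro _ _ Hub)) as [n [Hn Hmin]].
  assert (HnN : (n <= 2 * L - 1 + T)%nat) by (apply Hmin; auto).
  assert (HTc : Z.of_nat T = c) by (unfold T; apply Z2Nat.id; auto).
  split.
  - intros HL2. exists n. split; [split; auto|].
    split.
    + apply (lb2 eps L n He HL2 Hn).
    + assert (c <= Rceil (log2 (1 / eps)))%Z.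
      { unfold c. apply Rceil_mono. apply log2_mono; [lra|].
        subst L. replace (INR 2) with 2 by (simpl; lra).
        apply (Rmult_le_reg_r (2 * eps)); [lra|].
        replace (1 / (2 * eps) * (2 * eps)) with 1 by (field; lra).
        replace (1 / eps * (2 * eps)) with 2 by (field; lra). lra. }
      subst L. lia.
  - intros HL3. exists n. split; [split; auto|].
    split.
    + apply (lb3 eps L n He Hel HL3 Hn).
    + fold c. lia.
Qed.
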